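(* For $0<m<2$, the element $\hat D_W+m\gamma$ of the C*-algebra $C^*\Pi\otimes\End(S)$ is invertible.
   Context: $d$ is a positive even integer, $\Pi\cong\mathbb{Z}^d$ with generators $t_1,\dots,t_d$, $C^*\Pi\cong C(\hat\Pi)$ its group C*-algebra (with $\hat\Pi=\Hom(\Pi,\mathbb{T})$ and $t\in\Pi$ viewed as the function $\chi\mapsto\chi(t)$). $S$ is the irreducible $\mathbb{Z}_2$-graded representation (grading $\gamma$) of the complex Clifford algebra generated by $c(v_1),\dots,c(v_d)$ with $c(v_j)c(v_l)+c(v_l)c(v_j)=-2\delta_{jl}$, $c(v_j)^*=-c(v_j)$. Set $\hat U_j=t_j$, $\hat\nabla_j=\hat U_j-1$, $\hat D=\sum_j c(v_j)(\hat\nabla_j-\hat\nabla_j^* )/2$, $\hat W=\sum_j(\hat\nabla_j+\hat\nabla_j^* )/2$, $\hat D_W=\hat D+\gamma\hat W$. *)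

(* Defs.v *)
From mathcomp Require Import all_boot all_algebra.
From mathcomp Require Import reals complex.
Set Implicit Arguments.
Unset Strict Implicit.
Unset Printing Implicit Defensive.
Import GRing.Theory Num.Theory.
Local Open Scope ring_scope.

Section Defs.
Variable R : realType.
Local Notation C := (R[i]).

Definition adjmx (N : nat) (A : 'M[C]_N) : 'M[C]_N := (map_mx Num.conj A)^T.

(* Pontryagin dual of Pi = Z^d: a character chi is determined by the values
   z j = chi(t_j), which lie in the unit circle T.  So hat Pi = T^d. *)
Definition on_dual (d : nat) (z : 'I_d -> C) : Prop := forall j, `|z j| = 1.

(* An element of C*Pi (x) End(S) = C(hat Pi) (x) M_N(C) = C(hat Pi, M_N(C)),
   represented as a function on characters (only its values on hat Pi matter). *)
Definition cont_on_dual (d N : nat) (F : ('I_d -> C) -> 'M[C]_N) : Prop :=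
  forall z, on_dual z -> forall eps : C, 0 < eps ->
    exists2 delta : C, 0 < delta &
      forall w, on_dual w -> (forall j, `|z j - w j| < delta) ->
        forall a b, `|F z a b - F w a b| < eps.

Definition invertible_in_CPi_End (d N : nat) (F : ('I_d -> C) -> 'M[C]_N) : Prop :=
  exists G : ('I_d -> C) -> 'M[C]_N,
    cont_on_dual G /\
    forall z, on_dual z -> F z *m G z = 1%:M /\ G z *m F z = 1%:M.

Definition graded_clifford_rep (d N : nat) (c : 'I_d -> 'M[C]_N) (gam : 'M[C]_N) : Prop :=
  [/\ forall j l, c j *m c l + c l *m c j = (- 2 * (j == l)%:R)%:M,
      forall j, adjmx (c j) = - c j,
      gam *m gam = 1%:M, adjmx gam = gam &
      forall j, gam *m c j = - (c j *m gam)].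

Definition irreducible_rep (d N : nat) (c : 'I_d -> 'M[C]_N) (gam : 'M[C]_N) : Prop :=
  forall U : 'M[C]_N, (forall j, stablemx U (c j)) -> stablemx U gam ->
    (U == (0 : 'M[C]_N))%MS \/ (U == (1%:M : 'M[C]_N))%MS.

(* The generators: hat U_j = t_j is the function chi |-> chi(t_j) = z j;
   hat U_j^* is chi |-> conj (z j).  Scalar-valued functions act as scalar
   matrices in C*Pi (x) End(S). *)
Definition Uhat (d N : nat) (j : 'I_d) (z : 'I_d -> C) : 'M[C]_N := (z j)%:M.
Definition Nabla (d N : nat) (j : 'I_d) (z : 'I_d -> C) : 'M[C]_N := Uhat N j z - 1%:M.
Definition Nabla_adj (d N : nat) (j : 'I_d) (z : 'I_d -> C) : 'M[C]_N := adjmx (Nabla N j z).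

Definition Dhat (d N : nat) (c : 'I_d -> 'M[C]_N) (z : 'I_d -> C) : 'M[C]_N :=
  \sum_(j < d) c j *m ((2%:R : C)^-1 *: (Nabla N j z - Nabla_adj N j z)).

Definition What (d N : nat) (z : 'I_d -> C) : 'M[C]_N :=
  \sum_(j < d) ((2%:R : C)^-1 *: (Nabla N j z + Nabla_adj N j z)).

Definition DWhat (d N : nat) (c : 'I_d -> 'M[C]_N) (gam : 'M[C]_N)
  (z : 'I_d -> C) : 'M[C]_N :=
  Dhat c z + gam *m What N z.

End Defs.

(* Main.v *)
Require Import Defs.
From mathcomp Require Import all_boot all_algebra.
From mathcomp Require Import reals complex.
From mathcomp Require Import ring lra.
Import GRing.Theory Num.Theory.
Import mathcomp.order.order.Order.POrderTheory.
Local Open Scope ring_scope.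

Section Ev.
Variable F : numFieldType.
Variable d : nat.
Implicit Types (z w : 'I_d -> F).

Definition ev z (Q : ('I_d -> F) -> Prop) :=
  exists2 dl : F, 0 < dl & forall w, (forall j, `|z j - w j| < dl) -> Q w.

Lemma minpos (a b : F) : 0 < a -> 0 < b -> exists2 c : F, 0 < c & (c <= a) /\ (c <= b).
Proof.
move=> a0 b0; have [ab|ba] := real_leP (gtr0_real a0) (gtr0_real b0).
- by exists a.
- by exists b => //; split => //; apply: ltW.
Qed.

Lemma ev_and z P Q : ev z P -> ev z Q -> ev z (fun w => P w /\ Q w).
Proof.
move=> [a a0 Ha] [b b0 Hb]; have [c c0 [ca cb]] := minpos _ _ a0 b0.
exists c => // w Hw; split; [apply: Ha | apply: Hb] => j; exact: lt_le_trans (Hw j) _.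
Qed.

Lemma ev_mono z (P Q : _ -> Prop) : (forall w, P w -> Q w) -> ev z P -> ev z Q.
Proof. by move=> H [a a0 Ha]; exists a => // w /Ha /H. Qed.
Arguments ev_mono {z P Q}.
Arguments ev_and {z P Q}.

Lemma ev_true z : ev z (fun _ => True).
Proof. by exists 1. Qed.

Lemma ev_forall z (I : finType) (P : I -> _ -> Prop) :
  (forall i, ev z (P i)) -> ev z (fun w => forall i, P i w).
Proof.
move=> H; suff: forall s : seq I, ev z (fun w => forall i, i \in s -> P i w).
  by move=> /(_ (enum I)); apply: ev_mono => w Hw i; apply: Hw; rewrite mem_enum.
elim=> [|i s IH]; first by apply: ev_mono (ev_true z) => w _ i.
apply: ev_mono (ev_and (H i) IH) => w [H1 H2] k; rewrite inE => /orP [/eqP -> //|].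
exact: H2.
Qed.

Definition cont (g : ('I_d -> F) -> F) z :=
  forall eps : F, 0 < eps -> ev z (fun w => `|g z - g w| < eps).

Lemma cont_cst a z : cont (fun _ => a) z.
Proof. by move=> e e0; exists 1 => // w _; rewrite subrr normr0. Qed.

Lemma cont_proj j z : cont (fun w => w j) z.
Proof. by move=> e e0; exists e. Qed.

Lemma cont_add g h z : cont g z -> cont h z -> cont (fun w => g w + h w) z.
Proof.
move=> Hg Hh e e0.
have e2 : 0 < e / 2 by rewrite divr_gt0.
apply: ev_mono (ev_and (Hg _ e2) (Hh _ e2)) => w [H1 H2].
have -> : g z + h z - (g w + h w) = (g z - g w) + (h z - h w) by ring.
apply: le_lt_trans (ler_normD _ _) _; rewrite [e]splitr; exact: ltrD.
Qed.

Lemma cont_opp g z : cont g z -> cont (fun w => - g w) z.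
Proof.
move=> Hg e e0; apply: ev_mono (Hg _ e0) => w H.
by rewrite -opprD normrN.
Qed.

Lemma cont_mul g h z : cont g z -> cont h z -> cont (fun w => g w * h w) z.
Proof.
move=> Hg Hh e e0.
set M := `|g z| + `|h z| + 1.
have M0 : 0 < M by rewrite ltr_pwDr // addr_ge0.
set e1 := e / 2 / M.
have e10 : 0 < e1 by rewrite !divr_gt0.
have [c c0 [c1 ce]] := minpos _ _ ltr01 e10.
apply: ev_mono (ev_and (Hg _ c0) (Hh _ e10)) => w [H1 H2].
have -> : g z * h z - g w * h w = (g z - g w) * h z + g w * (h z - h w) by ring.
apply: le_lt_trans (ler_normD _ _) _; rewrite !normrM.
have hM : `|h z| < M by rewrite /M -addrA; apply: ltr_wpDl => //; rewrite ltrDl ltr01.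
have gM : `|g w| <= M.
  have -> : g w = g z - (g z - g w) by ring.
  apply: le_trans (ler_normB _ _) _; rewrite /M -addrA lerD2l.
  apply: le_trans (ltW (lt_le_trans H1 c1)) _; by rewrite lerDr.
have eM : e1 * M = e / 2 by rewrite /e1 divfK // gt_eqF.
rewrite [e]splitr -eM; apply: ltr_leD.
  have h1 : `|g z - g w| * `|h z| <= e1 * `|h z|.
    by rewrite ler_wpM2r // ltW // (lt_le_trans H1 ce).
  by apply: le_lt_trans h1 _; rewrite ltr_pM2l.
rewrite mulrC; apply: ler_pM => //; exact: ltW.
Qed.

Lemma cont_inv g z : g z != 0 -> cont g z -> cont (fun w => (g w)^-1) z.
Proof.
move=> gz0 Hg e e0.
set a := `|g z|.
have a0 : 0 < a by rewrite normr_gt0.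
have a20 : 0 < a / 2 by rewrite divr_gt0.
have [c c0 [c1 ce]] := minpos _ _ a20 (mulr_gt0 e0 (mulr_gt0 a0 a20)).
apply: ev_mono (Hg _ c0) => w H1.
have gw2 : a / 2 < `|g w|.
  have : a - `|g w| <= `|g z - g w| by apply: lerB_dist.
  move=> h; have := le_lt_trans h (lt_le_trans H1 c1).
  by rewrite ltrBlDr -ltrBlDl {1}[a]splitr addrK.
have gw0 : g w != 0 by rewrite -normr_gt0 (lt_trans a20 gw2).
have -> : (g z)^-1 - (g w)^-1 = (g w - g z) / (g z * g w) by field; apply/andP.
rewrite normrM normfV normrM -/a distrC ltr_pdivrMr; last by rewrite mulr_gt0 // (lt_trans a20 gw2).
apply: lt_le_trans (lt_le_trans H1 ce) _.
by rewrite ler_pM2l // ler_pM2l // ltW.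
Qed.

Lemma cont_ext g h z : (forall w, g w = h w) -> cont g z -> cont h z.
Proof. by move=> E H e e0; apply: ev_mono (H _ e0) => w; rewrite !E. Qed.
Arguments cont_ext {g h z}.
Arguments cont_add {g h z}.
Arguments cont_mul {g h z}.
Arguments cont_opp {g z}.
Arguments cont_inv {g z}.

Lemma cont_sum (I : Type) (s : seq I) (P : pred I) (g : I -> ('I_d -> F) -> F) z :
  (forall i, cont (g i) z) -> cont (fun w => \sum_(i <- s | P i) g i w) z.
Proof.
move=> H; elim: s => [|i s IH].
  by apply: cont_ext (cont_cst 0 z) => w; rewrite big_nil.
case Pi: (P i).
  by apply: cont_ext (cont_add (H i) IH) => w; rewrite big_cons Pi.
by apply: cont_ext IH => w; rewrite big_cons Pi.
Qed.

End Ev.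
Arguments cont {F d}.
Arguments ev {F d}.
Arguments ev_mono {F d z P Q}.
Arguments ev_and {F d z P Q}.
Arguments ev_forall {F d z I}.
Arguments cont_ext {F d g h z}.
Arguments cont_add {F d g h z}.
Arguments cont_mul {F d g h z}.
Arguments cont_opp {F d g z}.
Arguments cont_inv {F d g z}.
Arguments cont_cst {F d}.
Arguments cont_proj {F d}.

Section Main.
Variable R : realType.
Local Notation C := (R[i]).

Lemma conjE (x : C) : Num.conj x = conjc x. Proof. by []. Qed.

Lemma cont_conj d j (z : 'I_d -> C) : cont (fun w => Num.conj (w j)) z.
Proof. by move=> e e0; exists e => // w Hw; rewrite -rmorphB norm_conjC. Qed.

Lemma adjmx_scalar N (a : C) : adjmx (a%:M : 'M[C]_N) = (Num.conj a)%:M.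
Proof.
apply/matrixP => i k; rewrite !mxE eq_sym.
by rewrite rmorphMn.
Qed.

Variables (d N : nat) (c : 'I_d -> 'M[C]_N) (gam : 'M[C]_N) (m : C).

Definition sv (j : 'I_d) (z : 'I_d -> C) : C := 2^-1 * ((z j - 1) - (Num.conj (z j) - 1)).
Definition wv (z : 'I_d -> C) : C := \sum_(j < d) 2^-1 * ((z j - 1) + (Num.conj (z j) - 1)) + m.
Definition gv (z : 'I_d -> C) : C := wv z ^+ 2 - \sum_(j < d) sv j z ^+ 2.
Definition Amx (z : 'I_d -> C) : 'M[C]_N := \sum_(j < d) sv j z *: c j + wv z *: gam.

Lemma Nabla_eq (j : 'I_d) (z : 'I_d -> C) : Nabla N j z = (z j - 1)%:M.
Proof. by rewrite /Nabla /Uhat raddfB. Qed.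

Lemma A_eq z : DWhat c gam z + m *: gam = Amx z.
Proof.
rewrite /DWhat /Dhat /What /Amx /wv /Nabla_adj.
under eq_bigr do rewrite Nabla_eq adjmx_scalar -raddfB scale_scalar_mx mul_mx_scalar.
under [X in gam *m X]eq_bigr do rewrite Nabla_eq adjmx_scalar -raddfD scale_scalar_mx.
rewrite -raddf_sum mul_mx_scalar -addrA -scalerDl.
have E i : Num.conj (z i - 1) = Num.conj (z i) - 1 by rewrite rmorphB rmorph1.
by rewrite /sv; congr (_ + (_ + _) *: _); apply: eq_bigr => i _; rewrite E.
Qed.

Lemma two_neq0 : (2%:R : C) != 0.
Proof. by rewrite pnatr_eq0. Qed.

Lemma SS_eq (hc : forall j l, c j *m c l + c l *m c j = (- 2 * (j == l)%:R)%:M)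
  (s : 'I_d -> C) :
  (\sum_j s j *: c j) *m (\sum_j s j *: c j) = (- \sum_j s j ^+ 2)%:M.
Proof.
set P := (X in X = _).
have P1 : P = \sum_j \sum_l (s j * s l) *: (c j *m c l).
  rewrite /P mulmx_suml; apply: eq_bigr => j _; rewrite mulmx_sumr; apply: eq_bigr => l _.
  by rewrite -scalemxAl -scalemxAr scalerA.
have P2 : P = \sum_j \sum_l (s j * s l) *: (c l *m c j).
  rewrite P1 exchange_big /=; apply: eq_bigr => j _; apply: eq_bigr => l _; by rewrite mulrC.
have P3 : P + P = (- 2 * \sum_j s j ^+ 2)%:M.
  rewrite {1}P1 P2 -big_split /= mulr_sumr raddf_sum; apply: eq_bigr => j _.
  rewrite -big_split /=.
  under eq_bigr do rewrite -scalerDr hc scale_scalar_mx.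
  rewrite -raddf_sum; congr (_%:M).
  rewrite (bigD1 j) //= big1 => [|l hl]; last by rewrite eq_sym (negPf hl) !mulr0.
  by rewrite eqxx addr0 /= mulr1 expr2 mulrC.
transitivity ((2^-1 : C) *: (P + P)).
  have h2 : (2^-1 : C) + 2^-1 = 1 by field.
  by rewrite scalerDr -scalerDl h2 scale1r.
rewrite P3 scale_scalar_mx; congr (_%:M); by field.
Qed.

Lemma A_sq (hc : forall j l, c j *m c l + c l *m c j = (- 2 * (j == l)%:R)%:M)
  (hg2 : gam *m gam = 1%:M) (hac : forall j, gam *m c j = - (c j *m gam)) z :
  Amx z *m Amx z = (gv z)%:M.
Proof.
rewrite /Amx /gv mulmxDl !mulmxDr SS_eq //.
set S := \sum_j sv j z *: c j.
have cross : S *m (wv z *: gam) + (wv z *: gam) *m S = 0.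
  rewrite -scalemxAr -scalemxAl -scalerDr /S mulmx_suml mulmx_sumr -big_split /=.
  rewrite big1 ?scaler0 // => j _.
  by rewrite -scalemxAl -scalemxAr hac scalerN addrN.
have sq : (wv z *: gam) *m (wv z *: gam) = (wv z ^+ 2)%:M.
  by rewrite -scalemxAl -scalemxAr scalerA hg2 scale_scalar_mx expr2 mulr1.
by rewrite sq -addrA [X in _ + X]addrA cross add0r -raddfD addrC.
Qed.

Local Open Scope complex_scope.
Lemma gv_neq0 (hm : 0 < m < 2) z : on_dual z -> gv z != 0.
Proof.
move=> hz; case/andP: hm => m0 m2.
have mR : m = (complex.Re m)%:C by rewrite RRe_real // gtr0_real.
set mr := complex.Re m in mR.
have mr0 : 0 < mr by move: m0; rewrite ltcE => /andP[_].
have mr2 : mr < 2.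
  have e2 : (2 : C) = (2 : R)%:C by rewrite rmorph_nat.
  by move: m2; rewrite e2 ltcE => /andP[_].
have hs j : sv j z = (complex.Im (z j))%:C * 'i.
  rewrite /sv.
  have -> : (z j - 1) - (Num.conj (z j) - 1) = z j - (z j)^* by rewrite conjE; ring.
  by rewrite subcJ -!mulrA mulKf // two_neq0.
have hw : wv z = (\sum_j (complex.Re (z j) - 1) + mr)%:C.
  rewrite /wv rmorphD rmorph_sum {1}mR; congr (_ + _); apply: eq_bigr => j _.
  rewrite rmorphB rmorph1; transitivity (((z j) + (z j)^*)/2%:R - 1); last by rewrite -ReJ_add.
  by rewrite conjE; field.
pose X := (\sum_j (complex.Re (z j) - 1) + mr) ^+ 2 + \sum_j complex.Im (z j) ^+ 2.
have hg : gv z = X%:C.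
  have hs2 j : sv j z ^+ 2 = - ((complex.Im (z j)) ^+ 2)%:C.
    by rewrite hs exprMn sqr_i mulrN1 !expr2 rmorphM.
  rewrite /gv hw /X (eq_bigr _ (fun j _ => hs2 j)) sumrN opprK.
  rewrite [RHS]rmorphD [in RHS]rmorphXn [in RHS]rmorph_sum //.
rewrite hg; apply/negP => /eqP H.
have X0 : X = 0 by apply: complexI; exact: H.
move: X0; rewrite /X => /eqP; rewrite paddr_eq0 ?sqr_ge0 ?sumr_ge0 // => [|j _]; last exact: sqr_ge0.
case/andP; rewrite sqrf_eq0 => /eqP hwr /eqP hsum.
have hy j : complex.Im (z j) = 0.
  move: hsum => /eqP; rewrite psumr_eq0 => [|i _]; last exact: sqr_ge0.
  by move=> /allP /(_ j (mem_index_enum j)) /= /eqP /eqP; rewrite sqrf_eq0 => /eqP.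
have hx j : complex.Re (z j) - 1 = 0 \/ complex.Re (z j) - 1 <= -2.
  have hn : Num.sqrt (complex.Re (z j) ^+ 2 + complex.Im (z j) ^+ 2) = 1.
    by apply: complexI; rewrite -normc_def; exact: hz j.
  rewrite hy expr0n addr0 sqrtr_sqr in hn.
  case: (lerP 0 (complex.Re (z j))) => hx0; 
    [rewrite ger0_norm in hn | rewrite ltr0_norm in hn] => //; lra.
have hQ : (fun x : R => x = 0 \/ x <= -2) (\sum_j (complex.Re (z j) - 1)).
  apply: (big_ind (fun x : R => x = 0 \/ x <= -2)) => [|a b|j _]; [by left | | exact: hx].
  move=> ha hb; lra.
move: hQ => /=; lra.
Qed.

Lemma cont_sqr (g : ('I_d -> C) -> C) z : cont g z -> cont (fun w => g w ^+ 2) z.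
Proof. by move=> H; apply: (cont_ext _ (cont_mul H H)) => w; rewrite expr2. Qed.

Lemma cont_sv j z : cont (sv j) z.
Proof.
rewrite /sv; apply: cont_mul; first exact: cont_cst.
apply: cont_add; first by apply: cont_add; [exact: cont_proj | exact: cont_cst].
by apply: cont_opp; apply: cont_add; [exact: cont_conj | exact: cont_cst].
Qed.

Lemma cont_wv z : cont wv z.
Proof.
rewrite /wv; apply: cont_add; last exact: cont_cst.
apply: cont_sum => j; apply: cont_mul; first exact: cont_cst.
by apply: cont_add; apply: cont_add; (exact: cont_proj || exact: cont_conj || exact: cont_cst).
Qed.

Lemma cont_gv z : cont gv z.
Proof.
rewrite /gv; apply: cont_add; first exact: cont_sqr (cont_wv z).
apply: cont_opp; apply: cont_sum => j; exact: cont_sqr (cont_sv j z).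
Qed.

Definition Gmx (z : 'I_d -> C) : 'M[C]_N := (gv z)^-1 *: Amx z.

Lemma G_entry z a b :
  Gmx z a b = (gv z)^-1 * (\sum_j sv j z * c j a b + wv z * gam a b).
Proof.
rewrite /Gmx /Amx !mxE summxE; congr (_ * (_ + _)).
by apply: eq_bigr => j _; rewrite mxE.
Qed.

Lemma cont_G (hm : 0 < m < 2) z a b : on_dual z -> cont (fun w => Gmx w a b) z.
Proof.
move=> hz; apply: cont_ext (fun w => esym (G_entry w a b)) _.
apply: cont_mul; first exact: cont_inv (gv_neq0 hm z hz) (cont_gv z).
apply: cont_add; last by apply: cont_mul; [exact: cont_wv | exact: cont_cst].
apply: cont_sum => j; apply: cont_mul; [exact: cont_sv | exact: cont_cst].
Qed.

Lemma main_aux : graded_clifford_rep c gam -> 0 < m < 2 ->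
  invertible_in_CPi_End (fun z => DWhat c gam z + m *: gam).
Proof.
move=> [hc hadj hg2 hgadj hac] hm.
exists Gmx; split.
  move=> z hz e e0.
  have := ev_forall (fun (p : 'I_N * 'I_N) w => `|Gmx z p.1 p.2 - Gmx w p.1 p.2| < e)
    (fun p => cont_G hm z p.1 p.2 hz e e0).
  by case=> dl dl0 H; exists dl => // w _ hw a b; exact: (H w hw (a, b)).
move=> z hz /=; rewrite A_eq /Gmx -scalemxAr -scalemxAl A_sq //.
by rewrite scale_scalar_mx mulVf ?gv_neq0.
Qed.

End Main.

Theorem lemma3p3 (R : realType) (d N : nat) (c : 'I_d -> 'M[R[i]]_N)
  (gam : 'M[R[i]]_N) (m : R[i]) :
  (0 < d)%N -> ~~ odd d ->
  graded_clifford_rep c gam -> irreducible_rep c gam ->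
  0 < m < 2 ->
  invertible_in_CPi_End (fun z => DWhat c gam z + m *: gam).
Proof. by move=> _ _ hc _ hm; exact: main_aux. Qed.
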